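(* In a strategic game in the setting described in the context, if Assumption SAV is satisfied, then for all players $i,j\in\{1,\dots,n\}$ the graphs $\mathcal{S}_{ij}$ and $\mathcal{S}_{ji}$ are congruent, i.e., $\mathcal{S}_{ij}=\{(s_i,s_j):(s_j,s_i)\in\mathcal{S}_{ji}\}$; equivalently $\Psi_{ji}(\Psi_{ij}(s_i))=s_i$ for every strategy $s_i$ of player $i$ and $\Psi_{ij}(\Psi_{ji}(s_j))=s_j$ for every strategy $s_j$ of player $j$.
   Context: Setting: there are $n\ge 2$ players and a measurable space $(\Omega,\mathcal{F})$. Each player $i$ has a prior $p_i$, an action set $A_i\subseteq\mathbb{R}$ with $|A_i|>1$, and a finite private information partition $\mathcal{I}_i$ of $\Omega$. The priors are equivalent (same null sets), and strategies agreeing up to null events are identified. A strategy of player $i$ is a $\sigma(\mathcal{I}_i)$-measurable function $s_i:\Omega\to A_i$, and player $i$ may apply any such function. For each strategy $s_i$, player $i$ has a unique conjecture $\Psi_i(s_i)$ about the tuple of strategies of the other players; $\Psi_{ij}(s_i)$ denotes its component for player $j$ (player $i$'s conjecture about player $j$'s strategy given that $i$ applies $s_i$). The graph $\mathcal{S}_{ij}$ is the set of all pairs $(s_i,\Psi_{ij}(s_i))$ with $s_i$ ranging over all strategies of player $i$. Assumption SAV (strategic certainty): for every player $i$ and every strategy $s_i$, $\Psi_i(s_i)$ equals the true tuple of strategies the other players apply in response to $s_i$. *)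

(* Defs.v *)
From HB Require Import structures.
From mathcomp Require Import all_boot all_order all_algebra.
From mathcomp Require Import all_classical all_reals all_analysis.
Set Implicit Arguments. Unset Strict Implicit. Unset Printing Implicit Defensive.
Import Order.TTheory GRing.Theory Num.Theory.
Local Open Scope classical_set_scope.
Local Open Scope ring_scope.

Section Game.
Context {R : realType} {d : measure_display} {Omega : measurableType d}.

Definition equiv_priors (P Q : probability Omega R) : Prop :=
  forall E : set Omega, measurable E -> (P E = 0%E <-> Q E = 0%E).

(* The private information partition of player i is given by a labelling
   map [part : Omega -> K] into a finite type; the cells are its fibers,
   each of which is required to be measurable. *)
Definition measurable_partition (K : finType) (part : Omega -> K) : Prop :=
  forall k : K, measurable (part @^-1` [set k]).

(* A strategy of a player with action set [A] and information partition
   [part]: a sigma(I)-measurable map Omega -> A, i.e. (I finite) a map with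
   values in A that is constant on every information cell. *)
Definition is_strategy (A : set R) (K : finType) (part : Omega -> K)
  (s : Omega -> R) : Prop :=
  (forall w, A (s w)) /\ (forall w w', part w = part w' -> s w = s w').

(* Identification of strategies agreeing up to a null event (w.r.t. a prior;
   all priors have the same null sets). *)
Definition aeq_strat (P : probability Omega R) (s t : Omega -> R) : Prop :=
  P [set w | s w <> t w] = 0%E.

End Game.

(* Main.v *)
Require Import Defs.
From HB Require Import structures.
From mathcomp Require Import all_boot all_order all_algebra.
From mathcomp Require Import all_classical all_reals all_analysis.
Local Open Scope classical_set_scope.
Local Open Scope ring_scope.

Import Order.TTheory GRing.Theory Num.Theory.
Section Helpers.
Context {R : realType} {d : measure_display} {Omega : measurableType d}.

Lemma neq_meas {A : set R} {K : finType} {part : Omega -> K} {s t : Omega -> R} :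
  measurable_partition part -> is_strategy A part s -> is_strategy A part t ->
  measurable [set w | s w <> t w].
Proof.
move=> hp [_ hs] [_ ht].
have -> : [set w | s w <> t w] =
  \bigcup_(k in [set k | exists w, part w = k /\ s w <> t w]) (part @^-1` [set k]).
  apply/seteqP; split => w /=.
    by move=> h; exists (part w) => //; exists w.
  move=> [k [w' [hk hw']] /= hwk] e.
  have pe : part w' = part w by rewrite hk hwk.
  by apply: hw'; rewrite (hs w' w) // (ht w' w).
apply: fin_bigcup_measurable; first exact: finite_finset.
by move=> k _; apply: hp.
Qed.

Lemma aeq_sym {P : probability Omega R} {s t} : aeq_strat P s t -> aeq_strat P t s.
Proof.
rewrite /aeq_strat => h.
have -> : [set w | t w <> s w] = [set w | s w <> t w].
  by apply/seteqP; split => w /= h1 h2; apply: h1.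
exact: h.
Qed.

Lemma aeq_trans {P : probability Omega R} {A : set R} {K : finType} {part : Omega -> K} {s t u} :
  measurable_partition part -> is_strategy A part s -> is_strategy A part t ->
  is_strategy A part u ->
  aeq_strat P s t -> aeq_strat P t u -> aeq_strat P s u.
Proof.
rewrite /aeq_strat => hp hs ht hu h1 h2.
apply/eqP; rewrite eq_le measure_ge0 andbT.
apply: (le_trans (y := P ([set w | s w <> t w] `|` [set w | t w <> u w]))).
  apply: le_measure; rewrite ?inE.
  - exact: neq_meas hp hs hu.
  - by apply: measurableU; [exact: neq_meas hp hs ht | exact: neq_meas hp ht hu].
  - move=> w /= h; case: (pselect (s w = t w)) => e; last by left.
    by right; rewrite -e.
apply: le_trans (measureU2 _ _ _) _.
- exact: neq_meas hp hs ht.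
- exact: neq_meas hp ht hu.
have aux : forall x y : \bar R, x = 0%E -> y = 0%E -> (x + y <= 0)%E.
  by move=> x y -> ->; rewrite adde0.
exact: aux h1 h2.
Qed.
End Helpers.

Theorem proposition1
  (R : realType) (d : measure_display) (Omega : measurableType d)
  (n : nat) (hn : (2 <= n)%N)
  (* priors, pairwise equivalent *)
  (P : 'I_n -> probability Omega R)
  (hP : forall i j, equiv_priors (P i) (P j))
  (* action sets A_i ⊆ R with |A_i| > 1 *)
  (A : 'I_n -> set R)
  (hA : forall i, exists a b, A i a /\ A i b /\ a <> b)
  (* finite private information partitions *)
  (K : 'I_n -> finType) (part : forall i, Omega -> K i)
  (hpart : forall i, measurable_partition (part i))
  (* conjectures: Psi i s j = player i's conjecture about player j's strategy
     when i applies s (meaningful for j <> i) *)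
  (Psi : 'I_n -> (Omega -> R) -> 'I_n -> (Omega -> R))
  (hPsi_strat : forall i s, is_strategy (A i) (part i) s ->
      forall j, j != i -> is_strategy (A j) (part j) (Psi i s j))
  (hPsi_wd : forall i s t, is_strategy (A i) (part i) s ->
      is_strategy (A i) (part i) t -> aeq_strat (P i) s t ->
      forall j, j != i -> aeq_strat (P j) (Psi i s j) (Psi i t j))
  (* the true play: the set [Realized] of strategy profiles that can actually
     occur; whatever strategy s_i player i applies, the others respond with a
     uniquely determined (up to null events) tuple of strategies *)
  (Realized : ('I_n -> (Omega -> R)) -> Prop)
  (hReal_strat : forall p, Realized p -> forall j, is_strategy (A j) (part j) (p j))
  (hReal_ex : forall i s, is_strategy (A i) (part i) s ->
      exists p, Realized p /\ aeq_strat (P i) (p i) s)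
  (hReal_uniq : forall i p q, Realized p -> Realized q -> aeq_strat (P i) (p i) (q i) ->
      forall j, aeq_strat (P j) (p j) (q j))
  (* Assumption SAV *)
  (hSAV : forall i s, is_strategy (A i) (part i) s ->
      forall p, Realized p -> aeq_strat (P i) (p i) s ->
      forall j, j != i -> aeq_strat (P j) (Psi i s j) (p j)) :
  forall i j : 'I_n, i != j ->
    (* S_ij = {(s_i, s_j) : (s_j, s_i) in S_ji} *)
    (forall s t,
       (is_strategy (A i) (part i) s /\ is_strategy (A j) (part j) t /\
        aeq_strat (P j) t (Psi i s j))
       <->
       (is_strategy (A j) (part j) t /\ is_strategy (A i) (part i) s /\
        aeq_strat (P i) s (Psi j t i)))
    /\ (forall s, is_strategy (A i) (part i) s -> aeq_strat (P i) (Psi j (Psi i s j) i) s)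
    /\ (forall t, is_strategy (A j) (part j) t -> aeq_strat (P j) (Psi i (Psi j t i) j) t).
Proof.
have key : forall i j, i != j -> forall s, is_strategy (A i) (part i) s ->
    aeq_strat (P i) (Psi j (Psi i s j) i) s.
  move=> i j ij s hs.
  have [p [hp hpi]] := hReal_ex i s hs.
  have hji : j != i by rewrite eq_sym.
  have h1 := hSAV i s hs p hp hpi j hji.
  have hts := hPsi_strat i s hs j hji.
  have h2 := hSAV j _ hts p hp (aeq_sym h1) i ij.
  exact: aeq_trans (hpart i) (hPsi_strat _ _ hts i ij) (hReal_strat _ hp i) hs h2 hpi.
have half : forall i j, i != j -> forall s t,
    is_strategy (A i) (part i) s -> is_strategy (A j) (part j) t ->
    aeq_strat (P j) t (Psi i s j) -> aeq_strat (P i) s (Psi j t i).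
  move=> i j ij s t hs ht h.
  have hji : j != i by rewrite eq_sym.
  have hts := hPsi_strat i s hs j hji.
  have h3 := hPsi_wd j t (Psi i s j) ht hts h i ij.
  apply: aeq_sym.
  exact: aeq_trans (hpart i) (hPsi_strat _ _ ht i ij) (hPsi_strat _ _ hts i ij) hs h3 (key i j ij s hs).
move=> i j ij.
have hji : j != i by rewrite eq_sym.
split; last split.
- move=> s t; split.
    by move=> [hs [ht h]]; split => //; split => //; exact: half.
  by move=> [ht [hs h]]; split => //; split => //; exact: half.
- exact: key.
- exact: key.
Qed.
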